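(* Let $n$ be a composite positive integer. Then: (i) for every $a\in\,]n[=\{1,\dots,n\}$, $d_{\{a\}}(\mathbb{Z}_n)=n/\gcd(a,n)$; (ii) for every $a\in\,]n[$ with $\gcd(a,n)=1$, $d_{\{a,n-a\}}(\mathbb{Z}_n)=1+\lfloor\log_2 n\rfloor$; (iii) if $A=\{a\in\,]n[\,:\gcd(a,n)=1\}$, then $d_A(\mathbb{Z}_n)=1+\Omega(n)$, where $\Omega(n)$ is the number of prime factors of $n$ counted with multiplicity; (iv) if $A=\,]n-1[=\{1,\dots,n-1\}$, then $d_A(\mathbb{Z}_n)=2$.
   Context: For an integer $x\ge1$, $]x[=\{1,2,\dots,x\}$. Let $G$ be a finite abelian group (written additively) of exponent $n$ and let $\emptyset\ne A\subseteq\, ]n[$. The constant $d_A(G)$ is the least positive integer $t$ such that for every sequence $g_1,\dots,g_t$ of (not necessarily distinct) elements of $G$ there exist $\ell\ge1$, indices $1\le i_1<\dots<i_\ell\le t$ and elements $a_1,\dots,a_\ell\in A$ (repetitions allowed) with $\sum_{j=1}^{\ell}a_j g_{i_j}=0$ in $G$. *)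

(* Defs.v *)
From mathcomp Require Import all_boot all_order all_algebra.
Set Implicit Arguments. Unset Strict Implicit. Unset Printing Implicit Defensive.
Import GRing.Theory.
Local Open Scope ring_scope.

Definition oint (x : nat) : pred nat := [pred a : nat | (0 < a)%N && (a <= x)%N].

Definition has_A_zero_sum (n : nat) (A : pred nat) (s : seq 'Z_n) : Prop :=
  exists (I : {set 'I_(size s)}) (w : 'I_(size s) -> nat),
    I != set0 /\ (forall i, i \in I -> w i \in A) /\
    \sum_(i in I) (s`_i *+ w i) = 0.

Definition A_zs_property (n : nat) (A : pred nat) (t : nat) : Prop :=
  forall s : seq 'Z_n, size s = t -> has_A_zero_sum A s.

Definition is_dA (n : nat) (A : pred nat) (t : nat) : Prop :=
  (0 < t)%N /\ A_zs_property n A t /\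
  (forall t', (0 < t')%N -> (t' < t)%N -> ~ A_zs_property n A t').

Definition bigOmega (n : nat) : nat := (\sum_(p <- primes n) logn p n)%N.

(* Main.v *)
Require Import Defs.
From mathcomp Require Import all_boot all_order all_algebra.
From mathcomp Require Import zify ring.
Set Implicit Arguments. Unset Strict Implicit. Unset Printing Implicit Defensive.
Import GRing.Theory.

Lemma natZn_eq0 n (Hn : (1 < n)%N) (N : nat) : (((N%:R : 'Z_n) == 0)%R) = (n %| N).
Proof. by rewrite -(inj_eq val_inj) /= val_Zp_nat. Qed.

Lemma zsum n (Hn : (1 < n)%N) (T : finType) (I : {set T}) (x w : T -> nat) :
  ((\sum_(i in I) (((x i)%:R : 'Z_n) *+ w i) == 0)%R) = (n %| \sum_(i in I) x i * w i).
Proof.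
rewrite -natZn_eq0 // natr_sum; congr (_ == _).
by apply: eq_bigr => i _; rewrite natrM mulr_natr.
Qed.

Lemma Zn_val n (Hn : (1 < n)%N) (x : 'Z_n) : (((val x)%:R : 'Z_n) = x)%R.
Proof. by apply: val_inj; rewrite /= val_Zp_nat // modn_small // -[n in (_ < n)%N]Zp_cast // ltn_ord. Qed.

Lemma zsum_seq n (Hn : (1 < n)%N) (s : seq 'Z_n) (I : {set 'I_(size s)}) (w : 'I_(size s) -> nat) :
  ((\sum_(i in I) ((nth 0%R s i) *+ w i) == 0)%R) = (n %| \sum_(i in I) val ((nth 0%R s i)) * w i).
Proof.
rewrite -(zsum Hn I (fun i => val ((nth 0%R s i)))); congr (_ == _).
by apply: eq_bigr => i _; rewrite Zn_val.
Qed.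

Lemma mulrn_n n (Hn : (1 < n)%N) (x : 'Z_n) : (x *+ n = 0)%R.
Proof.
have h : ((n%:R : 'Z_n) = 0)%R by apply/eqP; rewrite natZn_eq0.
by rewrite -mulr_natr h mulr0.
Qed.

Lemma mulrn_modn n (Hn : (1 < n)%N) (x : 'Z_n) w : (x *+ (w %% n) = x *+ w)%R.
Proof. by rewrite {2}(divn_eq w n) mulrnDr mulrnA mulrnAC mulrn_n // mul0rn add0r. Qed.

Lemma set_I1 (I : {set 'I_1}) : I != set0 -> I = [set ord0].
Proof.
case/set0Pn => i Hi; apply/setP => j; rewrite in_set1 !ord1 eqxx.
by move: Hi; rewrite ord1.
Qed.

Lemma part4 n (Hn : (1 < n)%N) : is_dA n (oint (n - 1)) 2.
Proof.
split => //; split.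
- case => [|x [|y [|]]] //= _.
  have [x0|xn0] := eqVneq x 0%R.
    exists [set ord0], (fun _ => 1%N); split; first by apply/set0Pn; exists ord0; rewrite in_set1.
    split; first by move=> i _; rewrite /oint inE /= subn_gt0 Hn.
    by rewrite big_set1 /= x0 mul0rn.
  have [y0|yn0] := eqVneq y 0%R.
    exists [set (@Ordinal 2 1 isT)], (fun _ => 1%N); split; first by apply/set0Pn; exists (@Ordinal 2 1 isT); rewrite in_set1.
    split; first by move=> i _; rewrite /oint inE /= subn_gt0 Hn.
    by rewrite big_set1 /= y0 mul0rn.
  have Hx : (0 < val x < n)%N.
    rewrite lt0n; apply/andP; split; first by apply: contra xn0 => /eqP h; apply/eqP/val_inj.
    by rewrite -[n in (_ < n)%N]Zp_cast // ltn_ord.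
  have Hy : (0 < val y < n)%N.
    rewrite lt0n; apply/andP; split; first by apply: contra yn0 => /eqP h; apply/eqP/val_inj.
    by rewrite -[n in (_ < n)%N]Zp_cast // ltn_ord.
  exists [set: 'I_2], (fun i : 'I_2 => if i == ord0 then val y else (n - val x)%N).
  split; first by apply/set0Pn; exists ord0.
  split.
    move=> i _; rewrite /oint inE; case: ifP => _; case/andP: Hx => Hx1 Hx2; case/andP: Hy => Hy1 Hy2.
      by rewrite Hy1 /= leq_subRL ?add1n // ltnW.
    by rewrite subn_gt0 Hx2 /= leq_sub2l.
  apply/eqP; rewrite zsum_seq //.
  rewrite (eq_bigl xpredT) ?big_ord_recr ?big_ord0 /=; last by move=> i; rewrite in_setT.
  rewrite add0n mulnBr (mulnC (val x) (val y)) subnKC ?dvdn_mull //.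
  by rewrite leq_mul2l ltnW ?orbT //; case/andP: Hx.
- move=> t' Ht0 Ht1 Hp.
  have t1 : t' = 1%N by apply/eqP; rewrite eqn_leq -ltnS Ht1.
  subst t'.
  have [I [w [HI [Hw Hs]]]] := Hp [:: 1%R] erefl.
  move: Hs; rewrite (set_I1 HI) big_set1 /=.
  move/eqP; rewrite natZn_eq0 // => /dvdn_leq.
  have := Hw ord0; rewrite (set_I1 HI) set11 => /(_ isT); rewrite /oint inE => /andP [H1 H2].
  move/(_ H1) => H3; lia.
Qed.

Lemma pigeon (aT rT : finType) (f : aT -> rT) :
  (#|rT| < #|aT|)%N -> exists x y, x != y /\ f x = f y.
Proof.
move=> H; have : ~~ injectiveb f.
  by apply/negP => /injectiveP /leq_card; rewrite leqNgt H.
by case/injectivePn => x [y Hxy Hf]; exists x, y.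
Qed.

Lemma divgcd n a k : (0 < n)%N -> n %| k * a -> (n %/ gcdn a n) %| k.
Proof.
move=> Hn H.
have Hg : (0 < gcdn a n)%N by rewrite gcdn_gt0 Hn orbT.
have H2 : n %| k * gcdn a n by rewrite muln_gcdr dvdn_gcd H dvdn_mull.
rewrite -(dvdn_pmul2r Hg) divnK //; exact: dvdn_gcdr.
Qed.

Lemma val_Zn1 n (Hn : (1 < n)%N) : val (1%R : 'Z_n) = 1%N.
Proof. by have := val_Zp_nat Hn 1; rewrite modn_small. Qed.

Lemma part1 n (Hn : (1 < n)%N) a (Ha : a \in oint n) : is_dA n (pred1 a) (n %/ gcdn a n).
Proof.
have Hn0 : (0 < n)%N by apply: ltnW.
set g := gcdn a n.
have Hg : (0 < g)%N by rewrite gcdn_gt0 Hn0 orbT.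
have Hgn : g %| n by apply: dvdn_gcdr.
have Hga : g %| a by apply: dvdn_gcdl.
have Hm : (0 < n %/ g)%N by rewrite divn_gt0 // dvdn_leq.
split => //; split.
- move=> s Hs.
  pose F (i : 'I_(size s)) := (val (nth 0%R s i) * a)%N.
  pose P (k : nat) := ((\sum_(i : 'I_(size s) | (i < k)%N) F i) %% n)%N.
  have HgP k : g %| P k.
    rewrite /P /dvdn modn_dvdm //; change (g %| \sum_(i : 'I_(size s) | (i < k)%N) F i); apply: dvdn_sum => i _; exact: dvdn_mull.
  have Hlt k : (P k %/ g < n %/ g)%N by rewrite ltn_divLR // divnK // ltn_pmod.
  pose f (k : 'I_(n %/ g).+1) : 'I_(n %/ g) := Ordinal (Hlt k).
  have [k1 [k2 [Hne Hf]]] : exists k1 k2, k1 != k2 /\ f k1 = f k2 by apply: pigeon; rewrite !card_ord.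
  have HP : P k1 = P k2.
    by rewrite -(divnK (HgP k1)) -(divnK (HgP k2)); have := congr1 val Hf => /= ->.
  wlog Hlt12 : k1 k2 Hne HP {Hf} / (k1 < k2)%N.
    move=> W; case: (ltngtP k1 k2) => h; first exact: (W k1 k2).
      by apply: (W k2 k1) => //; rewrite eq_sym.
    by move: Hne; rewrite (val_inj h) eqxx.
  have Hk2 : (k2 <= size s)%N by rewrite Hs -ltnS ltn_ord.
  have Hk1 : (k1 < size s)%N by apply: leq_trans Hlt12 Hk2.
  exists [set i : 'I_(size s) | (k1 <= i)%N && (i < k2)%N], (fun _ => a).
  split; first by apply/set0Pn; exists (Ordinal Hk1); rewrite inE /= leqnn Hlt12.
  split; first by move=> i _; rewrite inE.
  apply/eqP; rewrite zsum_seq //.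
  have E : (\sum_(i : 'I_(size s) | (i < k2)%N) F i = \sum_(i : 'I_(size s) | (i < k1)%N) F i +
             \sum_(i in [set i : 'I_(size s) | (k1 <= i)%N && (i < k2)%N]) F i)%N.
    rewrite (bigID (fun i : 'I_(size s) => (i < k1)%N)) /=; congr (_ + _)%N; apply: eq_bigl => i.
      by case h: (i < k1)%N; rewrite ?andbT ?andbF //; apply: ltn_trans h Hlt12.
    by rewrite inE -leqNgt andbC.
  move: HP; rewrite /P E -{1}[\sum_(i : 'I_(size s) | (i < k1)%N) F i]addn0 => /eqP.
  by rewrite eqn_modDl mod0n eq_sym.
- move=> t' Ht0 Ht1 Hp.
  have [I [w [HI [Hw Hs]]]] := Hp (nseq t' 1%R) (size_nseq _ _).
  move/eqP: Hs; rewrite zsum_seq //.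
  have E : (\sum_(i in I) val (nth 0%R (nseq t' (1%R : 'Z_n)) i) * w i = #|I| * a)%N.
    rewrite -sum_nat_const; apply: eq_bigr => i Hi.
    have hi : (i < t')%N := leq_trans (ltn_ord i) (eq_leq (size_nseq _ _)).
    by rewrite nth_nseq hi val_Zn1 // mul1n (eqP (Hw i Hi)).
  rewrite E => /(divgcd Hn0) /dvdn_leq.
  rewrite card_gt0 HI => /(_ isT) H1.
  have H2 : (#|I| <= t')%N by rewrite -[t' in (_ <= t')%N](size_nseq t' (1%R : 'Z_n)) -[X in (_ <= X)%N]card_ord max_card.
  have := leq_trans H1 H2; rewrite leqNgt Ht1 //.
Qed.

Lemma mulrn_subn n (Hn : (1 < n)%N) (x : 'Z_n) a : (a <= n)%N -> (x *+ (n - a) = - (x *+ a))%R.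
Proof.
move=> Ha; apply/eqP; rewrite -subr_eq0 opprK -mulrnDr subnK //; apply/eqP; exact: mulrn_n.
Qed.

Lemma ffun_neq (T : finType) (A B : {ffun T -> bool}) : A != B -> exists i, A i != B i.
Proof.
move=> H; apply/existsP; apply: contraR H => /existsPn H; apply/eqP/ffunP => i.
by apply/eqP; move: (H i); rewrite negbK.
Qed.

Lemma pow2_dvd k (S : {set 'I_k}) (j : 'I_k) : (forall i, i \in S -> j <= i)%N ->
  (2 ^ j.+1 %| \sum_(i in S) 2 ^ i) = (j \notin S).
Proof.
move=> HS.
have Hd : 2 ^ j.+1 %| \sum_(i in S | i != j) 2 ^ i.
  apply: dvdn_sum => i /andP [Hi Hij]; apply: dvdn_exp2l.
  by rewrite ltn_neqAle HS // andbT; apply: contra Hij => /eqP h; apply/eqP/val_inj.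
case: (boolP (j \in S)) => Hj.
  rewrite (bigD1 j) //= dvdn_addl // expnS -{2}[2 ^ j]mul1n dvdn_pmul2r ?expn_gt0 //.
rewrite (eq_bigl (fun i => (i \in S) && (i != j))) //.
by move=> i; case h: (i \in S) => //=; apply/esym; apply: contraNneq Hj => <-.
Qed.

Lemma pow2_disj k (S1 S2 : {set 'I_k}) i0 : [disjoint S1 & S2] -> i0 \in S1 :|: S2 ->
  \sum_(i in S1) 2 ^ i != \sum_(i in S2) 2 ^ i.
Proof.
move=> Hdis Hi0.
case: (arg_minnP (fun i : 'I_k => nat_of_ord i) Hi0) => j Hj Hmin.
have H1 : forall i, i \in S1 -> (j <= i)%N by move=> i Hi; apply: Hmin; change (i \in S1 :|: S2); rewrite inE Hi.
have H2 : forall i, i \in S2 -> (j <= i)%N by move=> i Hi; apply: Hmin; change (i \in S1 :|: S2); rewrite inE Hi orbT.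
apply/negP => /eqP E.
have := pow2_dvd H1; have := pow2_dvd H2; rewrite E => ->.
have Hj2 : j \in S1 :|: S2 by []. move: Hj2; rewrite inE; case/orP => Hj2.
  by rewrite (disjointFr Hdis Hj2) Hj2.
by rewrite (disjointFl Hdis Hj2) Hj2.
Qed.

Lemma pow2_lt k (S : {set 'I_k}) : (\sum_(i in S) 2 ^ i < 2 ^ k)%N.
Proof.
apply: (@leq_ltn_trans (\sum_(i < k) 2 ^ i)).
  rewrite big_mkcond /=; apply: leq_sum => i _; by case: ifP.
elim: k {S} => [|k IH]; first by rewrite big_ord0.
by rewrite big_ord_recr /= expnS mul2n -addnn ltn_add2r.
Qed.

Lemma mod_cancel a n P N : coprime a n -> (a * P == a * N %[mod n]) -> (P == N %[mod n]).
Proof.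
move=> Hc; wlog HNP : P N / (N <= P)%N.
  move=> W; case: (leqP N P) => h; first exact: W.
  by rewrite eq_sym => H; rewrite eq_sym; apply: W => //; apply: ltnW.
rewrite !eqn_mod_dvd ?leq_mul2l ?HNP ?orbT // -mulnBr Gauss_dvdr //.
by rewrite coprime_sym.
Qed.

Lemma part2 n (Hn : (1 < n)%N) a (Ha : a \in oint n) (Hc : coprime a n) :
  is_dA n [pred x : nat | (x == a) || (x == n - a)%N] (1 + trunc_log 2 n).
Proof.
move: (Ha); rewrite /oint inE => /andP [Ha1 Ha2].
split => //; split.
- move=> s Hs.
  pose f (A : {ffun 'I_(size s) -> bool}) := (\sum_(i | A i) nth 0 s i)%R.
  have [A [B [Hne Hf]]] : exists A B, A != B /\ f A = f B.
    have Hz : #|'Z_n| = n by rewrite card_ord Zp_cast.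
    apply: pigeon; rewrite card_ffun card_bool !card_ord.
    have := @trunc_log_ltn 2 n isT; rewrite -[(trunc_log 2 n).+1]add1n -Hs; by rewrite -{1}(Zp_cast Hn).
  have [i0 Hi0] := ffun_neq Hne.
  exists [set i | A i != B i], (fun i => if A i then a else (n - a)%N).
  split; first by apply/set0Pn; exists i0; rewrite inE.
  split; first by move=> i _; rewrite inE; case: (A i); rewrite /= eqxx ?orbT.
  rewrite big_mkcond /=.
  rewrite (eq_bigr (fun i => ((if A i then nth 0 s i else 0) - (if B i then nth 0 s i else 0)) *+ a)%R).
    rewrite sumrMnl sumrB -!big_mkcond /=.
    by change ((f A - f B) *+ a = 0)%R; rewrite Hf subrr mul0rn.
  move=> i _; rewrite inE; case: (A i); case: (B i) => /=; rewrite ?subrr ?mul0rn ?subr0 //.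
  by rewrite sub0r mulNrn (mulrn_subn Hn _ Ha2).
- move=> t' Ht0 Ht1 Hp.
  have Hpow : (2 ^ t' <= n)%N.
    apply: leq_trans (trunc_logP (isT : (1 < 2)%N) (ltnW Hn)).
    by apply: leq_pexp2l => //; rewrite -ltnS -add1n.
  pose s := mkseq (fun i => ((2 ^ i)%:R : 'Z_n)%R) t'.
  have [I [w [HI [Hw Hs]]]] := Hp s (size_mkseq _ _).
  move: Hs; rewrite (eq_bigr (fun i : 'I_(size s) => (((2 ^ i)%:R : 'Z_n) *+ w i)%R)); last first.
    move=> i _; rewrite nth_mkseq //; exact: leq_trans (ltn_ord i) (eq_leq (size_mkseq _ _)).
  move/eqP; rewrite zsum // => Hd.
  pose S1 := [set i in I | w i == a]; pose S2 := [set i in I | w i != a].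
  have E : (\sum_(i in I) 2 ^ i * w i = a * \sum_(i in S1) 2 ^ i + (n - a) * \sum_(i in S2) 2 ^ i)%N.
    rewrite (bigID (fun i => w i == a)) /= !big_distrr /=; congr (_ + _)%N; apply: eq_big => i.
    + by rewrite inE.
    + by case/andP => _ /eqP ->; rewrite mulnC.
    + by rewrite inE.
    + case/andP => Hi Hia; move: (Hw i Hi); rewrite inE (negPf Hia) /= => /eqP ->.
      by rewrite mulnC.
  move: Hd; rewrite E; set P := (\sum_(i in S1) 2 ^ i)%N; set N := (\sum_(i in S2) 2 ^ i)%N => Hd.
  have h1 : ((a * P + (n - a) * N + a * N) %% n = (a * N) %% n)%N.
    by rewrite -modnDml (eqP Hd) add0n.
  have h2 : (a * P + (n - a) * N + a * N = N * n + a * P)%N.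
    by rewrite -addnA -mulnDl subnK // addnC [(n * N)%N]mulnC.
  move: h1; rewrite h2 modnMDl => /eqP /(mod_cancel Hc).
  have HP : (P < n)%N.
    apply: leq_trans Hpow; exact: (leq_trans (pow2_lt S1) (eq_leq (congr1 (expn 2) (size_mkseq _ _)))).
  have HN : (N < n)%N.
    apply: leq_trans Hpow; exact: (leq_trans (pow2_lt S2) (eq_leq (congr1 (expn 2) (size_mkseq _ _)))).
  rewrite !modn_small //; apply/negP.
  case/set0Pn: HI => i0 Hi0.
  apply: (pow2_disj (i0 := i0)).
    rewrite -setI_eq0; apply/eqP/setP => i; rewrite !inE.
    by case: (w i == a); rewrite ?andbF.
  by rewrite !inE Hi0 /=; case: (w i0 == a).
Qed.

Definition Lp (n : nat) : seq nat := flatten [seq nseq (logn p n) p | p <- primes n].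

Lemma size_Lp n : size (Lp n) = bigOmega n.
Proof.
rewrite /Lp size_flatten /shape -map_comp sumnE big_map /bigOmega.
by apply: eq_bigr => p _ /=; rewrite size_nseq.
Qed.

Lemma mem_Lp n x : x \in Lp n -> x \in primes n.
Proof.
case/flattenP => s /mapP [p Hp ->]; rewrite mem_nseq => /andP [_ /eqP ->] //.
Qed.

Lemma prod_Lp n : (0 < n)%N -> \prod_(j <- Lp n) j = n.
Proof.
move=> Hn; rewrite /Lp big_flatten /= big_map {3}(prod_prime_decomp Hn) prime_decompE big_map /=.
apply: eq_bigr => p _; rewrite big_nseq.
elim: (logn p n) => [|e IH] //=; by rewrite IH expnS.
Qed.

Lemma count_Lp n p : p \in primes n -> count_mem p (Lp n) = logn p n.
Proof.
move=> Hp; rewrite /Lp count_flatten -map_comp sumnE big_map.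
rewrite (bigD1_seq p) //= ?primes_uniq // count_nseq /= eqxx mul1n big1 ?addn0 //.
by move=> q Hq /=; rewrite count_nseq /= (negPf Hq).
Qed.

Lemma position (L : seq nat) x l : (l < count_mem x L)%N ->
  exists j, (j < size L)%N /\ nth 0 L j = x /\ count_mem x (take j L) = l.
Proof.
elim: L l => [|y L IH] l //=.
case: (eqVneq y x) => [->|Hyx] /=; rewrite ?eqxx ?add1n.
  case: l => [|l] Hl; first by exists 0%N.
  have [j [Hj1 [Hj2 Hj3]]] := IH l Hl.
  by exists j.+1; rewrite /= eqxx add1n Hj3.
rewrite add0n => Hl.
have [j [Hj1 [Hj2 Hj3]]] := IH l Hl.
by exists j.+1; rewrite /= (negPf Hyx) add0n Hj3.
Qed.

Definition Dp (n i : nat) : nat := \prod_(j <- take i (Lp n)) j.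

Lemma Lp_gt0 n j : (0 < nth 0 (Lp n) j)%N \/ (size (Lp n) <= j)%N.
Proof.
case: (ltnP j (size (Lp n))) => h; last by right.
left; have := mem_nth 0 h => /mem_Lp; rewrite mem_primes => /andP [Hp _]; exact: prime_gt0.
Qed.

Lemma Dp_gt0 n i : (0 < Dp n i)%N.
Proof.
rewrite /Dp big_seq big_mkcond; apply: prodn_gt0 => j.
case: ifP => // h.
by have := mem_take h => /mem_Lp; rewrite mem_primes => /andP [Hp _]; exact: prime_gt0.
Qed.

Lemma Dp_dvd n i k : (i <= k)%N -> Dp n i %| Dp n k.
Proof.
move=> h; rewrite /Dp -(cat_take_drop i (take k (Lp n))) big_cat /= take_takel //.
exact: dvdn_mulr.
Qed.

Lemma Dp_dvdn n i : (0 < n)%N -> Dp n i %| n.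
Proof.
move=> Hn; rewrite -{2}(prod_Lp Hn) -(cat_take_drop i (Lp n)) big_cat /=.
exact: dvdn_mulr.
Qed.

Lemma DpS n i : (i < size (Lp n))%N -> Dp n i.+1 = (Dp n i * nth 0 (Lp n) i)%N.
Proof. by move=> h; rewrite /Dp (take_nth 0 h) -cats1 big_cat /= big_seq1. Qed.

Lemma part3_lower n (Hn : (1 < n)%N) t' : (0 < t')%N -> (t' < 1 + bigOmega n)%N ->
  ~ A_zs_property n [pred a : nat | (a \in oint n) && coprime a n] t'.
Proof.
move=> Ht0 Ht1 Hp.
have Ht : (t' <= size (Lp n))%N by rewrite size_Lp -ltnS -add1n.
pose s := mkseq (fun i => ((Dp n i)%:R : 'Z_n)%R) t'.
have [I [w [HI [Hw Hs]]]] := Hp s (size_mkseq _ _).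
move: Hs; rewrite (eq_bigr (fun i : 'I_(size s) => (((Dp n i)%:R : 'Z_n) *+ w i)%R)); last first.
  move=> i _; rewrite nth_mkseq //; exact: leq_trans (ltn_ord i) (eq_leq (size_mkseq _ _)).
move/eqP; rewrite zsum // => Hd.
case/set0Pn: HI => i0 Hi0.
case: (arg_minnP (fun i : 'I_(size s) => nat_of_ord i) Hi0) => j Hj Hmin.
have Hj' : j \in I by [].
have Hjt : (j < size (Lp n))%N.
  apply: leq_trans Ht; exact: leq_trans (ltn_ord j) (eq_leq (size_mkseq _ _)).
set p := nth 0 (Lp n) j.
have Hpp : p \in primes n := mem_Lp (mem_nth 0 Hjt).
move: Hpp; rewrite mem_primes => /and3P [Hpr _ Hpn].
have HD : Dp n j.+1 %| \sum_(i in I | i != j) Dp n i * w i.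
  apply: dvdn_sum => i /andP [Hi Hij]; apply: dvdn_mulr; apply: Dp_dvd.
  rewrite ltn_neqAle (Hmin i Hi) andbT.
  by apply: contra Hij => /eqP h; apply/eqP/val_inj.
have HDn : Dp n j.+1 %| n by apply: Dp_dvdn; apply: ltnW.
move: Hd; rewrite (bigD1 j) //= => Hd.
have : Dp n j.+1 %| Dp n j * w j.
  by rewrite -(dvdn_addl _ HD); exact: dvdn_trans HDn Hd.
rewrite DpS // dvdn_pmul2l ?Dp_gt0 // => Hpw.
have := Hw j Hj'; rewrite inE => /andP [_ Hc].
have : p %| gcdn (w j) n by rewrite dvdn_gcd Hpw Hpn.
rewrite (eqP Hc) dvdn1 => /eqP hp1.
by rewrite hp1 in Hpr.
Qed.

Definition lev (n p y : nat) : nat := logn p (gcdn y n).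

Lemma lev_lt n p y : (0 < n)%N -> prime p -> (lev n p y < logn p n)%N ->
  p ^ lev n p y %| y /\ ~~ (p ^ (lev n p y).+1 %| y).
Proof.
move=> Hn Hp Hl.
have Hg : (0 < gcdn y n)%N by rewrite gcdn_gt0 Hn orbT.
split.
  apply: dvdn_trans (dvdn_gcdl y n); by rewrite pfactor_dvdn.
apply/negP => H.
have H2 : p ^ (lev n p y).+1 %| n by rewrite pfactor_dvdn.
have : p ^ (lev n p y).+1 %| gcdn y n by rewrite dvdn_gcd H H2.
by rewrite pfactor_dvdn // ltnn.
Qed.

Lemma lev_ge n p y : (0 < n)%N -> prime p -> (logn p n <= lev n p y)%N -> p ^ logn p n %| y.
Proof.
move=> Hn Hp Hl.
have Hg : (0 < gcdn y n)%N by rewrite gcdn_gt0 Hn orbT.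
apply: dvdn_trans (dvdn_gcdl y n); by rewrite pfactor_dvdn.
Qed.

Lemma coprime_pe1 p e : prime p -> (0 < e)%N -> coprime (p ^ e - 1) p.
Proof.
move=> Hp He; rewrite coprime_sym prime_coprime //; apply/negP => H.
have H1 : p %| p ^ e by apply: dvdn_exp.
have : p %| p ^ e - (p ^ e - 1) by apply: dvdn_sub.
rewrite subKn ?expn_gt0 ?prime_gt0 // dvdn1 => /eqP hp; by rewrite hp in Hp.
Qed.

Lemma coprime_div_lev n p y : (0 < n)%N -> prime p -> (lev n p y < logn p n)%N ->
  coprime (y %/ p ^ lev n p y) p.
Proof.
move=> Hn Hp Hl; have [H1 H2] := lev_lt Hn Hp Hl.
rewrite coprime_sym prime_coprime //; apply: contra H2 => H.
by rewrite expnS -{2}(divnK H1) dvdn_pmul2r ?expn_gt0 ?prime_gt0.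
Qed.

Lemma pair_prime n p (Hn : (0 < n)%N) (Hp : prime p) kk (x : 'I_kk -> nat) (C : {set 'I_kk}) :
  (forall l, (l < logn p n)%N -> ~~ odd #|[set i in C | lev n p (x i) == l]|) ->
  exists a : 'I_kk -> nat, (forall i, coprime (a i) p) /\
     p ^ logn p n %| \sum_(i in C) x i * a i.
Proof.
set e := logn p n.
move: {2}#|C|.+1 (ltnSn #|C|) => m; elim: m C => [|m IH] C //.
rewrite ltnS => HC Hpar.
case: (set_0Vmem C) => [->|[i Hi]].
  by exists (fun _ => 1%N); split; [move=> _; exact: coprime1n | rewrite big1 ?dvdn0 // => i; rewrite inE].
case: (ltnP (lev n p (x i)) e) => Hl.
- set l := lev n p (x i).
  set X := [set k in C | lev n p (x k) == l].
  have HiX : i \in X by rewrite inE Hi eqxx.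
  have HX : (1 < #|X|)%N.
    have := Hpar l Hl; rewrite -/X.
    have : (0 < #|X|)%N by rewrite card_gt0; apply/set0Pn; exists i.
    by case: #|X| => [|[|c]].
  have : (0 < #|X :\ i|)%N by move: HX; rewrite (cardsD1 i X) HiX add1n ltnS.
  rewrite card_gt0 => /set0Pn [j]; rewrite !inE => /and3P [Hji HjC /eqP Hjl].
  set C' := C :\ i :\ j.
  have HC' : (#|C'| < m)%N.
    move: HC; rewrite (cardsD1 i C) Hi (cardsD1 j (C :\ i)) !inE Hji HjC /=.
    rewrite -/C'; lia.
  have Hpar' : forall l', (l' < e)%N -> ~~ odd #|[set k in C' | lev n p (x k) == l']|.
    move=> l' Hl'; have := Hpar l' Hl'.
    rewrite (cardsD1 i) (cardsD1 j) !inE Hi HjC Hji /= Hjl.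
    have -> : [set k in C | lev n p (x k) == l'] :\ i :\ j = [set k in C' | lev n p (x k) == l'].
      by apply/setP => k; rewrite !inE; case: (k == j); case: (k == i).
    by case: (l == l'); rewrite /= ?add1n ?add0n //= negbK.
  have [a [Ha Hsum]] := IH C' HC' Hpar'.
  pose r y := (y %/ p ^ l)%N.
  exists (fun k => if k == i then r (x j) else if k == j then ((p ^ e - 1) * r (x i))%N else a k).
  split.
    move=> k; case: ifP => _.
      by rewrite /r -Hjl; apply: coprime_div_lev => //; rewrite Hjl.
    case: ifP => _ //; rewrite coprimeMl coprime_pe1 //=; last by apply: leq_ltn_trans Hl.
    exact: coprime_div_lev.
  rewrite (bigD1 i) //= eqxx (bigD1 j) /=; last by rewrite HjC Hji.
  rewrite (negPf Hji) eqxx addnA; apply: dvdn_add.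
    have [Hi1 _] := lev_lt Hn Hp Hl.
    have [Hj1 _] : p ^ lev n p (x j) %| x j /\ _ := lev_lt Hn Hp (leq_ltn_trans (eq_leq Hjl) Hl).
    rewrite Hjl -/l in Hj1.
    have key : forall u v ri rj, u = (ri * p ^ l)%N -> v = (rj * p ^ l)%N ->
        p ^ e %| u * rj + v * ((p ^ e - 1) * ri).
      move=> u v ri rj -> ->.
      have -> : (ri * p ^ l * rj + rj * p ^ l * ((p ^ e - 1) * ri) =
               ri * rj * p ^ l * (1 + (p ^ e - 1)))%N by ring.
      by rewrite subnKC ?expn_gt0 ?prime_gt0 // dvdn_mull.
    by apply: key; rewrite /r divnK.
  rewrite (eq_bigl (fun k => k \in C')); last first.
    by move=> k; rewrite !inE; case: (k \in C); case: (k != i); case: (k != j).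
  rewrite (eq_bigr (fun k => x k * a k)%N) //.
  move=> k; rewrite !inE => /and3P [Hkj Hki _]; by rewrite (negPf Hki) (negPf Hkj).
- have Hxi : p ^ e %| x i := lev_ge Hn Hp Hl.
  set C' := C :\ i.
  have HC' : (#|C'| < m)%N by move: HC; rewrite (cardsD1 i C) Hi add1n.
  have Hpar' : forall l', (l' < e)%N -> ~~ odd #|[set k in C' | lev n p (x k) == l']|.
    move=> l' Hl'; have := Hpar l' Hl'.
    have -> : [set k in C | lev n p (x k) == l'] = [set k in C' | lev n p (x k) == l'].
      apply/setP => k; rewrite !inE; case: (eqVneq k i) => [->|] //=.
      by rewrite Hi /=; apply/negbTE; rewrite neq_ltn (leq_trans Hl' Hl) orbT.
    done.
  have [a [Ha Hsum]] := IH C' HC' Hpar'.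
  exists a; split => //.
  rewrite (bigD1 i) //=; apply: dvdn_add; first exact: dvdn_mulr.
  by rewrite (eq_bigl (fun k => k \in C')) // => k; rewrite !inE andbC.
Qed.

Lemma cop_add u v p : p %| u -> coprime (u + v) p = coprime v p.
Proof. by move=> /dvdnP [c ->]; rewrite -coprime_modl modnMDl coprime_modl. Qed.

Lemma cop_primes y n : (0 < n)%N -> (forall p, p \in primes n -> coprime y p) -> coprime y n.
Proof.
move=> Hn H; rewrite /coprime; apply/negPn/negP => Hg.
have Hg1 : (1 < gcdn y n)%N.
  have h0 : (0 < gcdn y n)%N by rewrite gcdn_gt0 Hn orbT.
  by move: h0 Hg; case: (gcdn y n) => [|[|]].
set q := pdiv (gcdn y n).
have Hq : prime q by apply: pdiv_prime.
have Hqg : q %| gcdn y n by apply: pdiv_dvd.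
move: Hqg; rewrite dvdn_gcd => /andP [Hqy Hqn].
have : coprime y q by apply: H; rewrite mem_primes Hq Hn Hqn.
by rewrite coprime_sym prime_coprime // Hqy.
Qed.

Lemma combine n (Hn : (0 < n)%N) kk (x : 'I_kk -> nat) (C : {set 'I_kk}) :
  (forall p, p \in primes n -> exists a : 'I_kk -> nat, (forall i, coprime (a i) p) /\
       p ^ logn p n %| \sum_(i in C) x i * a i) ->
  exists W : 'I_kk -> nat, (forall i, coprime (W i) n) /\ n %| \sum_(i in C) x i * W i.
Proof.
move=> Hyp.
have inv : forall ps, uniq ps -> {subset ps <= primes n} -> exists W : 'I_kk -> nat,
    (forall i p, p \in ps -> coprime (W i) p) /\
    (forall i p, p \in primes n -> p \notin ps -> p %| W i) /\
    n %| \sum_(i in C) x i * W i.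
  elim => [|p ps IH] /=.
    move=> _ _; exists (fun _ => 0%N); split => //; split => [i p _ _|]; first exact: dvdn0.
    by rewrite big1 ?dvdn0 // => i _; rewrite muln0.
  move=> /andP [Hpn Hu] Hsub.
  have [W [H1 [H2 H3]]] := IH Hu (fun q Hq => Hsub q (ltac:(by rewrite inE Hq orbT))).
  have Hp : p \in primes n := Hsub p (mem_head _ _).
  have [a [Ha Hs]] := Hyp p Hp.
  move: (Hp); rewrite mem_primes => /and3P [Hpr _ Hpdn].
  set e := logn p n; set M := (n %/ p ^ e)%N.
  have HM : (M * p ^ e)%N = n by rewrite divnK // pfactor_dvdnn.
  have HMq : forall q, q \in primes n -> q != p -> q %| M.
    move=> q; rewrite mem_primes => /and3P [Hqr _ Hqn] Hqp.
    have Hc : coprime q (p ^ e) by rewrite coprimeXr // prime_coprime // dvdn_prime2 // Hqp.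
    by rewrite -(Gauss_dvdl _ Hc) HM.
  have HpM : ~~ (p %| M).
    apply/negP => H; have : p ^ e.+1 %| n by rewrite -HM expnS dvdn_pmul2r ?expn_gt0 ?prime_gt0.
    by rewrite pfactor_dvdn // ltnn.
  exists (fun i => W i + M * a i)%N; split; [|split].
  - move=> i q; rewrite inE; case: (eqVneq q p) => [->|Hqp] /= Hq.
      rewrite cop_add; last exact: H2.
      by rewrite coprimeMl Ha andbT coprime_sym prime_coprime.
    rewrite addnC cop_add; first exact: H1.
    by apply: dvdn_mulr; apply: HMq => //; apply: Hsub; rewrite inE Hq orbT.
  - move=> i q Hq; rewrite inE negb_or => /andP [Hqp Hqps].
    by apply: dvdn_add; [exact: H2 | apply: dvdn_mulr; exact: HMq].
  - rewrite (eq_bigr (fun i => x i * W i + M * (x i * a i))%N); last first.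
      by move=> i _; rewrite mulnDr mulnCA.
    rewrite big_split /= -big_distrr /=; apply: dvdn_add => //.
    have := dvdn_mul (dvdnn M) Hs; by rewrite HM.
have [W [H1 [H2 H3]]] := inv (primes n) (primes_uniq n) (fun _ h => h).
exists W; split => // i; apply: cop_primes => // p Hp; exact: H1.
Qed.

Lemma card_sum (T : finType) (h : T -> bool) : #|[set i | h i]| = (\sum_i (h i : nat))%N.
Proof.
rewrite -sum1_card big_mkcond /=; apply: eq_bigr => i _; rewrite inE; by case: (h i).
Qed.

Lemma odd_symdiff (T : finType) (f g : T -> bool) :
  odd #|[set i | f i != g i]| = odd #|[set i | f i]| (+) odd #|[set i | g i]|.
Proof.
have E : (#|[set i | f i != g i]| + 2 * #|[set i | f i && g i]| = #|[set i | f i]| + #|[set i | g i]|)%N.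
  rewrite !card_sum big_distrr -!big_split /=; apply: eq_bigr => i _.
  by case: (f i); case: (g i).
by rewrite -oddD -E oddD oddM /= addbF.
Qed.

Lemma part3_upper n (Hn : (1 < n)%N) :
  A_zs_property n [pred a : nat | (a \in oint n) && coprime a n] (1 + bigOmega n).
Proof.
move=> s Hs.
have Hn0 : (0 < n)%N by apply: ltnW.
set L := Lp n.
pose x (i : 'I_(size s)) := val (nth 0%R s i).
pose sig (A : {ffun 'I_(size s) -> bool}) : {ffun 'I_(size L) -> bool} :=
  [ffun j : 'I_(size L) => odd #|[set i | A i && (lev n (nth 0 L j) (x i) == count_mem (nth 0 L j) (take j L))]|].
have [A [B [Hne Hf]]] : exists A B, A != B /\ sig A = sig B.
  apply: pigeon; rewrite !card_ffun !card_bool !card_ord Hs /L size_Lp ltn_exp2l //.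
set I := [set i | A i != B i].
have Hpar : forall p, p \in primes n -> forall l, (l < logn p n)%N ->
    ~~ odd #|[set i in I | lev n p (x i) == l]|.
  move=> p Hp l Hl.
  have Hcl : (l < count_mem p L)%N by rewrite /L count_Lp.
  have [j [Hj1 [Hj2 Hj3]]] := position Hcl.
  have := congr1 (fun g : {ffun 'I_(size L) -> bool} => g (Ordinal Hj1)) Hf; rewrite /sig !ffunE /= Hj2 Hj3 => Heq.
  have -> : [set i in I | lev n p (x i) == l] =
            [set i | (A i && (lev n p (x i) == l)) != (B i && (lev n p (x i) == l))].
    by apply/setP => i; rewrite !inE; case: (lev n p (x i) == l); rewrite ?andbT ?andbF.
  by rewrite odd_symdiff Heq addbb.
have Hex : forall p, p \in primes n -> exists a : 'I_(size s) -> nat,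
    (forall i, coprime (a i) p) /\ p ^ logn p n %| \sum_(i in I) x i * a i.
  move=> p Hp; apply: pair_prime => //; last exact: Hpar.
  by move: Hp; rewrite mem_primes => /andP [].
have [W [HW1 HW2]] := combine Hn0 Hex.
exists I, (fun i => W i %% n)%N.
split.
  have [i0 Hi0] := ffun_neq Hne; by apply/set0Pn; exists i0; rewrite inE.
split.
  move=> i _; rewrite inE /oint inE coprime_modl HW1 andbT; apply/andP; split; last by apply: ltnW; apply: ltn_pmod.
  have := HW1 i; rewrite -coprime_modl; case: (W i %% n)%N => // .
  by rewrite /coprime gcd0n => /eqP h; rewrite h in Hn.
rewrite (eq_bigr (fun i : 'I_(size s) => nth 0%R s i *+ W i)%R); last by move=> i _; rewrite mulrn_modn.
by apply/eqP; rewrite zsum_seq.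
Qed.

Theorem theorem2 (n : nat) (Hn1 : (1 < n)%N) (Hcomp : ~~ prime n) :
  (forall a : nat, a \in oint n -> is_dA n (pred1 a) (n %/ gcdn a n)%N) /\
  (forall a : nat, a \in oint n -> coprime a n ->
     is_dA n [pred x : nat | (x == a) || (x == n - a)%N] (1 + trunc_log 2 n)%N) /\
  is_dA n [pred a : nat | (a \in oint n) && coprime a n] (1 + bigOmega n)%N /\
  is_dA n (oint (n - 1)) 2.
Proof.
split; first by move=> a Ha; apply: part1.
split; first by move=> a Ha Hc; apply: part2.
split; last exact: part4.
split => //; split; first exact: part3_upper.
move=> t' Ht0 Ht1; exact: part3_lower.
Qed.
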